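(* Let $n_1,n_2,d_1,d_2$ be positive integers with $1\le d_\iota\le n_\iota-1$ for $\iota=1,2$. If $\frac{d_1}{n_1}=\frac{d_2}{n_2}$ and $\binom{n_1}{d_1}=\binom{n_2}{d_2}$, then $n_1=n_2$ and $d_1=d_2$. *)

(* Defs.v *)
From mathcomp Require Import all_boot all_order all_algebra.

(* Main.v *)
Require Import Defs.
From mathcomp Require Import all_boot all_order all_algebra.
From mathcomp Require Import zify.
Import GRing.Theory Num.Theory.

Lemma binSn_ge n d : ('C(n, d) <= 'C(n.+1, d))%N.
Proof. case: d => [|k]; first by rewrite !bin0. rewrite binS; lia. Qed.

Lemma f_mono_e d e e' : (e <= e')%N -> ('C(d + e, d) <= 'C(d + e', d))%N.
Proof.
elim: e' => [|e' IH]; first by rewrite leqn0 => /eqP ->.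
rewrite leq_eqVlt => /orP [/eqP -> //| H].
apply: leq_trans (IH H) _. by rewrite addnS binSn_ge.
Qed.

Lemma f_strict_d d d' e : (1 <= e)%N -> (d < d')%N -> ('C(d + e, d) < 'C(d' + e, d'))%N.
Proof.
move=> He; elim: d' => [//|d' IH].
rewrite ltnS leq_eqVlt => /orP [/eqP ->| H].
  rewrite addSn binS; have : (0 < 'C(d' + e, d'.+1))%N by rewrite bin_gt0; lia.
  lia.
apply: leq_trans (IH H) _. rewrite addSn binS; have : (0 < 'C(d' + e, d'.+1))%N by rewrite bin_gt0; lia.
lia.
Qed.

Lemma key n1 n2 d1 d2 : (1 <= d1 <= n1.-1)%N -> (1 <= d2 <= n2.-1)%N ->
  (d1 * n2 = d2 * n1)%N -> (n1 < n2)%N -> ('C(n1, d1) < 'C(n2, d2))%N.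
Proof.
move=> /andP [h1 h2] /andP [h3 h4] E L.
have hd : (d1 < d2)%N by nia.
have he : (n1 - d1 <= n2 - d2)%N by nia.
have -> : n1 = d1 + (n1 - d1) by lia.
have -> : n2 = d2 + (n2 - d2) by lia.
apply: (leq_trans (@f_strict_d d1 d2 (n1 - d1) _ hd)); first lia.
exact: f_mono_e.
Qed.

Theorem lemma2p8 (n1 n2 d1 d2 : nat) :
  (1 <= d1 <= n1.-1)%N -> (1 <= d2 <= n2.-1)%N ->
  ((d1%:R / n1%:R : rat) = d2%:R / n2%:R)%R ->
  'C(n1, d1) = 'C(n2, d2) ->
  n1 = n2 /\ d1 = d2.
Proof.
move=> H1 H2 E C.
have n1p : (n1 != 0)%N by move: H1 => /andP[]; lia.
have n2p : (n2 != 0)%N by move: H2 => /andP[]; lia.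
have E' : (d1 * n2 = d2 * n1)%N.
  move/eqP: E; rewrite eqr_div ?pnatr_eq0 // -!natrM eqr_nat; by move/eqP.
have [L|L|L] := ltngtP n1 n2.
- by have := @key _ _ _ _ H1 H2 E' L; rewrite C ltnn.
- by have := @key _ _ _ _ H2 H1 (esym E') L; rewrite C ltnn.
- split => //; subst; nia.
Qed.
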